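(* Let $B$ and $B'$ be distinct bases of a sparse paving matroid $M$. For any $a\in B-B'$ and any $X\subseteq B'-B$, there are at least $|X|-2$ elements $x\in X$ for which both $(B-a)\cup \{x\}$ and $(B'-x)\cup \{a\}$ are bases of $M$.
   Context: A matroid $M$ of rank $r$ is sparse paving if every nonspanning circuit of $M$ is a hyperplane; equivalently, every $r$-element subset of $E(M)$ is either a basis or a circuit-hyperplane (a set that is both a circuit and a hyperplane). *)

(* Defs.v *)
From mathcomp Require Import all_boot.
Set Implicit Arguments. Unset Strict Implicit. Unset Printing Implicit Defensive.

Record matroid (T : finType) := Matroid {
  mbases : {set {set T}};
  mbases_nonempty : mbases != set0;
  mbases_exchange : forall B1 B2, B1 \in mbases -> B2 \in mbases ->
    forall x, x \in B1 :\: B2 ->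
    exists2 y, y \in B2 :\: B1 & (B1 :\ x) :|: [set y] \in mbases
}.

Section MatroidDefs.
Variables (T : finType) (M : matroid T).

Definition is_basis (B : {set T}) : bool := B \in mbases M.

Definition indep (A : {set T}) : bool := [exists B in mbases M, A \subset B].

Definition rank (A : {set T}) : nat :=
  \max_(I : {set T} | (I \subset A) && indep I) #|I|.

Definition mrank : nat := rank [set: T].

Definition circuit (C : {set T}) : bool :=
  ~~ indep C && [forall x in C, indep (C :\ x)].

Definition flat (F : {set T}) : bool :=
  [forall x in ~: F, rank F < rank (x |: F)].

Definition hyperplane (H : {set T}) : bool :=
  flat H && ((rank H).+1 == mrank).

Definition sparse_paving : Prop :=
  forall C : {set T}, circuit C -> rank C < mrank -> hyperplane C.

End MatroidDefs.

(* Main.v *)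
Require Import Defs.
From mathcomp Require Import all_boot.
From mathcomp Require Import zify.

Set Implicit Arguments. Unset Strict Implicit. Unset Printing Implicit Defensive.

Section S.
Variables (T : finType) (M : matroid T).

Lemma card_swap (A : {set T}) x y : x \in A -> y \notin A ->
  #|(A :\ x) :|: [set y]| = #|A|.
Proof.
move=> xA yA; rewrite setUC cardsU1 (cardsD1 x A) xA !inE negb_and yA orbT.
by rewrite addnC.
Qed.

Lemma bases_card_n n : forall B1 B2, is_basis M B1 -> is_basis M B2 ->
  #|B1 :\: B2| = n -> #|B1| = #|B2|.
Proof.
elim: n => [|n IH] B1 B2 h1 h2 hn.
  have s12 : B1 \subset B2.
    by apply/subsetP=> z zB1; apply/negPn/negP=> zB2;
       move: hn; rewrite (cardsD1 z) !inE zB1 zB2.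
  suff -> : B1 = B2 by [].
  apply/eqP; rewrite eqEsubset s12 /=; apply/subsetP=> z zB2; apply/negPn/negP=> zB1.
  have [y] := @mbases_exchange _ M B2 B1 h2 h1 z (ltac:(by rewrite !inE zB2 zB1)).
  by move/subsetP: s12 => s12; rewrite !inE => /andP[/negP yB2 /s12].
have [x xD] : exists x, x \in B1 :\: B2.
  by apply/set0Pn; rewrite -card_gt0 hn.
have [y yD hB3] := mbases_exchange h1 h2 xD.
move: (xD) (yD); rewrite !inE => /andP[xB2 xB1] /andP[yB1 yB2].
rewrite -(card_swap xB1 yB1); apply: IH => //.
have -> : (B1 :\ x :|: [set y]) :\: B2 = (B1 :\: B2) :\ x.
  apply/setP=> z; rewrite !inE; case: (z =P y) => [->|]; first by rewrite yB2 !andbF.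
  by move=> _ /=; rewrite orbF; case: (z \in B2); case: (z == x).
by move: hn; rewrite (cardsD1 x (B1 :\: B2)) xD add1n => -[].
Qed.

Lemma bases_card B1 B2 : is_basis M B1 -> is_basis M B2 -> #|B1| = #|B2|.
Proof. by move=> h1 h2; apply: (bases_card_n h1 h2 (erefl _)). Qed.

Variable B0 : {set T}.
Hypothesis hB0 : is_basis M B0.

Lemma indep_sub (A : {set T}) : indep M A -> exists2 B, is_basis M B & A \subset B.
Proof. by case/existsP=> B /andP[h1 h2]; exists B. Qed.

Lemma basis_indep B : is_basis M B -> indep M B.
Proof. by move=> h; apply/existsP; exists B; rewrite (h : B \in mbases M) subxx. Qed.

Lemma sub_indep (A A' : {set T}) : A \subset A' -> indep M A' -> indep M A.
Proof.
move=> s /indep_sub [B hB s']; apply/existsP; exists B; rewrite (hB : B \in mbases M).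
exact: subset_trans s s'.
Qed.

Lemma indep_card (A : {set T}) : indep M A -> #|A| <= #|B0|.
Proof.
by case/indep_sub=> B hB s; rewrite (bases_card hB0 hB); apply: subset_leq_card.
Qed.

Lemma indep_basis (A : {set T}) : indep M A -> #|B0| <= #|A| -> is_basis M A.
Proof.
case/indep_sub=> B hB s; rewrite (bases_card hB0 hB) => c.
suff /eqP -> : A == B by [].
by rewrite eqEcard s c.
Qed.

Lemma rank_ge (A I : {set T}) : I \subset A -> indep M I -> #|I| <= rank M A.
Proof.
move=> s i; rewrite /rank.
by apply: (@leq_bigmax_cond _ (fun I : {set T} => (I \subset A) && indep M I) (fun I : {set T} => #|I|) I); rewrite s i.
Qed.

Lemma rank_wit (A : {set T}) : exists2 I : {set T}, (I \subset A) && indep M I & rank M A = #|I|.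
Proof.
have p0 : 0 < #|[pred I : {set T} | (I \subset A) && indep M I]|.
  apply/card_gt0P; exists set0; rewrite inE sub0set /=.
  exact: (sub_indep (sub0set B0) (basis_indep hB0)).
have [I hI e] := eq_bigmax_cond (fun I : {set T} => #|I|) p0.
by exists I; [move: hI; rewrite inE | rewrite /rank -e].
Qed.

Lemma rank_le (A : {set T}) : rank M A <= #|B0|.
Proof. by have [I /andP[_ i] ->] := rank_wit A; apply: indep_card. Qed.

Lemma mrank_eq : mrank M = #|B0|.
Proof.
apply/eqP; rewrite eqn_leq rank_le /=.
by apply: rank_ge (subsetT _) (basis_indep hB0).
Qed.

Lemma dep_rank (C : {set T}) : ~~ indep M C -> rank M C < #|C|.
Proof.
move=> d; have [I /andP[s i] ->] := rank_wit C.
apply: proper_card; rewrite properEneq s andbT.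
by apply: contraNneq d => <-.
Qed.

Hypothesis sp : sparse_paving M.

Lemma small_indep_n n : forall A : {set T}, #|A| <= n -> #|A| < #|B0| -> indep M A.
Proof.
elim: n => [|n IH] A hn hr.
  move: hn; rewrite leqn0 cards_eq0 => /eqP ->.
  exact: (sub_indep (sub0set B0) (basis_indep hB0)).
case: (boolP (indep M A)) => // d; exfalso.
case: (boolP [forall x in A, indep M (A :\ x)]) => hall.
  have c : circuit M A by rewrite /circuit d hall.
  have dr := dep_rank d.
  have := sp c; rewrite mrank_eq => /(_ (ltn_trans dr hr)) /andP[_ /eqP e].
  rewrite mrank_eq in e; lia.
move: hall; rewrite negb_forall_in => /existsP[x /andP[xA dx]].
move/negP: dx; apply; apply: IH; last by apply: leq_ltn_trans hr; apply: subset_leq_card; apply: subD1set.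
by move: hn; rewrite (cardsD1 x A) xA.
Qed.

Lemma small_indep (A : {set T}) : #|A| < #|B0| -> indep M A.
Proof. exact: small_indep_n. Qed.


Lemma nonbasis_circuit_hyp (S : {set T}) : #|S| = #|B0| -> ~~ is_basis M S ->
  ~~ indep M S /\ hyperplane M S.
Proof.
move=> cS nb.
have d : ~~ indep M S by apply: contra nb => i; apply: indep_basis; rewrite ?cS.
split => //; apply: sp.
  rewrite /circuit d /=; apply/forall_inP => z zS; apply: small_indep.
  by rewrite -cS (cardsD1 z S) zS.
by rewrite mrank_eq -cS; apply: dep_rank.
Qed.

Lemma part_one a x y : a \in B0 -> x \notin B0 -> y \notin B0 -> x != y ->
  ~~ is_basis M (B0 :\ a :|: [set x]) -> ~~ is_basis M (B0 :\ a :|: [set y]) ->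
  False.
Proof.
move=> aB xB yB xy nx ny.
set Sx := B0 :\ a :|: [set x].
have cSx : #|Sx| = #|B0| by apply: card_swap; rewrite // !inE negb_and xB orbT.
have [_ /andP[/forall_inP fl _]] := nonbasis_circuit_hyp cSx nx.
have ySx : y \in ~: Sx.
  rewrite !inE negb_or negb_and yB orbT /=; apply: contra xy => /eqP ->; by [].
have := fl y ySx.
have r1 : #|B0 :\ a| <= rank M Sx.
  apply: rank_ge; first by apply: subsetUl.
  exact: sub_indep (subD1set _ _) (basis_indep hB0).
have cBa : #|B0| = #|B0 :\ a|.+1 by rewrite (cardsD1 a B0) aB.
have [I /andP[sI iI] ->] := rank_wit (y |: Sx) => hlt.
have hI : is_basis M I by apply: indep_basis => //; lia.
have aI : a \in B0 :\: I.
  rewrite inE aB andbT; apply/negP => /(subsetP sI).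
  rewrite /Sx !inE eqxx /= => /orP[/eqP ay|/eqP ax].
    by move: yB; rewrite -ay aB.
  by move: xB; rewrite -ax aB.
have [w wD hw] := mbases_exchange hB0 hI aI.
move: wD; rewrite inE => /andP[wB /(subsetP sI)].
rewrite /Sx !inE (negbTE wB) andbF /= => /orP[/eqP ew|/eqP ew]; subst w.
  by move/negP: ny.
by move/negP: nx.
Qed.

Lemma part_two B x y a : is_basis M B -> x \in B -> y \in B -> x != y ->
  a \notin B ->
  ~~ is_basis M (B :\ x :|: [set a]) -> ~~ is_basis M (B :\ y :|: [set a]) ->
  False.
Proof.
move=> hB xB yB xy aB nx ny.
have cB := bases_card hB0 hB.
set W := B :\ x :\ y :|: [set a].
have cW : #|W|.+1 = #|B0|.
  rewrite /W setUC cardsU1 !inE.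
  rewrite (negbTE aB) !andbF /= cB (cardsD1 x B) xB.
  by rewrite (cardsD1 y (B :\ x)) !inE yB eq_sym xy.
have iW : indep M W by apply: small_indep; rewrite -cW.
have [B1 hB1 sW] := indep_sub iW.
have cB1 := bases_card hB0 hB1.
have [u uD] : exists u, u \in B1 :\: W.
  apply/set0Pn; rewrite -card_gt0 (cardsD B1 W) (setIidPr sW); lia.
move: uD; rewrite inE => /andP[uW uB1].
have eB1 : B1 = W :|: [set u].
  apply/eqP; rewrite eq_sym eqEcard subUset sW sub1set uB1 /= setUC cardsU1 uW.
  by rewrite -cB1 -cW add1n.
have xa : (x == a) = false by apply/eqP => e; move: aB; rewrite -e xB.
have ya : (y == a) = false by apply/eqP => e; move: aB; rewrite -e yB.
have yx : (y == x) = false by apply/eqP => e; move: xy; rewrite e eqxx.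
have xy' : (x == y) = false by apply/negbTE.
have eqx : W :|: [set x] = B :\ y :|: [set a].
  apply/setP=> z; rewrite !inE; case: (z =P x) => [->|/eqP zx].
    by rewrite xa xy' xB.
  case: (z =P y) => [->|/eqP zy]; first by rewrite ya /=.
  by rewrite /= orbF.
have eqy : W :|: [set y] = B :\ x :|: [set a].
  apply/setP=> z; rewrite !inE; case: (z =P y) => [->|/eqP zy].
    by rewrite ya yx yB.
  case: (z =P x) => [->|/eqP zx]; first by rewrite xa /=.
  by rewrite /= orbF.
have key w : w \in B -> w \notin W -> (w == x) || (w == y).
  move=> wB; rewrite !inE wB !andbT; case: (w =P x); case: (w =P y) => //=.
case: (boolP (u \in B)) => uB.
  case/orP: (key u uB uW) => /eqP eu; subst u.
    by move/negP: ny; rewrite -eqx -eB1.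
  by move/negP: nx; rewrite -eqy -eB1.
have uD : u \in B1 :\: B by rewrite inE uB uB1.
have [w wD hw] := mbases_exchange hB1 hB uD.
move: wD; rewrite inE => /andP[wB1 wB].
have wW : w \notin W by apply: contra wB1 => /(subsetP sW).
have eBu : B1 :\ u = W.
  by rewrite eB1 setDUl setDv setU0; apply/setDidPl; rewrite disjoint_sym disjoints1.
rewrite eBu in hw.
case/orP: (key w wB wW) => /eqP ew; subst w.
  by move/negP: ny; rewrite -eqx.
by move/negP: nx; rewrite -eqy.
Qed.

End S.

Theorem lemma2p2 (T : finType) (M : matroid T) (B B' : {set T}) (a : T)
    (X : {set T}) :
  sparse_paving M ->
  is_basis M B -> is_basis M B' -> B != B' ->
  a \in B :\: B' -> X \subset B' :\: B ->
  #|X| - 2 <=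
    #|[set x in X | is_basis M ((B :\ a) :|: [set x])
                    && is_basis M ((B' :\ x) :|: [set a])]|.
Proof.
move=> sp hB hB' _ aD sX.
move: aD; rewrite inE => /andP[aB' aB].
have inX z : z \in X -> (z \in B') && (z \notin B).
  by move/(subsetP sX); rewrite inE andbC.
set G := [set x in X | _].
set Bad1 := [set x in X | ~~ is_basis M ((B :\ a) :|: [set x])].
set Bad2 := [set x in X | ~~ is_basis M ((B' :\ x) :|: [set a])].
have c1 : #|Bad1| <= 1.
  apply/card_le1_eqP => x y; rewrite !inE => /andP[xX nx] /andP[yX ny].
  case: (x =P y) => // /eqP xy; exfalso.
  move: (inX x xX) (inX y yX) => /andP[_ xB] /andP[_ yB].
  exact: (part_one hB sp aB xB yB xy nx ny).
have c2 : #|Bad2| <= 1.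
  apply/card_le1_eqP => x y; rewrite !inE => /andP[xX nx] /andP[yX ny].
  case: (x =P y) => // /eqP xy; exfalso.
  move: (inX x xX) (inX y yX) => /andP[xB _] /andP[yB _].
  exact: (part_two hB sp hB' xB yB xy aB' nx ny).
have s : X \subset G :|: Bad1 :|: Bad2.
  apply/subsetP => z zX; rewrite !inE zX /=.
  by case: (is_basis M _); case: (is_basis M _).
have := subset_leq_card s.
have := leq_card_setU (G :|: Bad1) Bad2.
have := leq_card_setU G Bad1.
move=> /leqifP h1 /leqifP h2 h3.
have e1 : #|G :|: Bad1| <= #|G| + #|Bad1| by case: ifP h1 => _ h; lia.
have e2 : #|G :|: Bad1 :|: Bad2| <= #|G :|: Bad1| + #|Bad2| by case: ifP h2 => _ h; lia.
lia.
Qed.
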